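(* For every $v\equiv 0\pmod 4$ with $v\geq 12$ there exists a connected symmetric configuration $v_3$ with strong chromatic number exactly 5.
   Context: A symmetric configuration $v_3$ consists of a set of $v$ points and a collection of $v$ blocks, each block being a 3-element subset of the points, such that every point lies in exactly 3 blocks and any two distinct points lie in at most one common block; it is connected if it is not the union of two configurations on disjoint nonempty point sets. A strong colouring is an assignment of colours to points such that the three points of every block receive three distinct colours; the strong chromatic number is the minimum number of colours in a strong colouring. *)

(* Defs.v *)
From mathcomp Require Import all_boot.
Set Implicit Arguments. Unset Strict Implicit. Unset Printing Implicit Defensive.

Definition sym_config3 (v : nat) (B : 'I_v -> {set 'I_v}) : Prop :=
  (forall b, #|B b| = 3) /\
  (forall p : 'I_v, #|[set b | p \in B b]| = 3) /\
  (forall p q : 'I_v, p != q -> #|[set b | (p \in B b) && (q \in B b)]| <= 1).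

(* Connected: not the union of two configurations on disjoint nonempty
   point sets, i.e. there is no partition of the points into two nonempty
   parts P, ~: P such that every block lies entirely inside one part. *)
Definition config_connected (v : nat) (B : 'I_v -> {set 'I_v}) : Prop :=
  ~ exists P : {set 'I_v},
      [/\ P != set0, ~: P != set0 &
          forall b, (B b \subset P) \/ (B b \subset ~: P)].

Definition strong_colouring (v k : nat) (B : 'I_v -> {set 'I_v})
    (c : 'I_v -> 'I_k) : Prop :=
  forall b, {in B b &, injective c}.

Definition strong_colourable (v k : nat) (B : 'I_v -> {set 'I_v}) : Prop :=
  exists c : 'I_v -> 'I_k, strong_colouring B c.

Definition strong_chromatic_number_eq (v : nat) (B : 'I_v -> {set 'I_v})
    (n : nat) : Prop :=
  strong_colourable n B /\ (forall k, k < n -> ~ strong_colourable k B).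

(* Main.v *)
Require Import Defs.
From mathcomp Require Import all_boot zify.
Set Implicit Arguments. Unset Strict Implicit. Unset Printing Implicit Defensive.

Definition sh (v b k : nat) := if b + k < v then b + k else b + k - v.
Definition wn (b : nat) : seq nat :=
  nth [::] [:: [::8;4;3]; [::9;6;4]; [::5;3;1]; [::5;4;2]; [::0;7;1]; [::2;6;3]; [::5;6;7]] b.
Definition W (v b : nat) : seq nat :=
  if b < 7 then wn b else [:: b; sh v b 1; sh v b 3].
Definition Lt (v : nat) : seq (seq nat) :=
  [:: [::4;v-3;v-1]; [::2;4;v-2]; [::3;5;v-1]; [::0;2;5]; [::0;1;3];
      [::2;3;6]; [::1;5;6]; [::4;6;7]; [::0;7;8]; [::1;8;9]].
Definition L (v p : nat) : seq nat :=
  if p < 10 then nth [::] (Lt v) p else [:: p-3; p-1; p].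

Ltac revall b := repeat match goal with H : context[b] |- _ => revert H end.
Ltac enum7 b := revall b; case: b => [|[|[|[|[|[|[|b]]]]]]]; intros; [..|exfalso; lia].
Ltac enum10 b := revall b; case: b => [|[|[|[|[|[|[|[|[|[|b]]]]]]]]]]; intros; [..|exfalso; lia].
Ltac revprops := repeat match goal with H : ?T |- _ => match type of T with Prop => revert H end end.
Ltac crush := revprops; rewrite /sh ?in_cons ?in_nil /=; repeat (case: ifP => ?); intros; lia.

Lemma memWL v b p : 12 <= v -> b < v -> p < v -> (p \in W v b) = (b \in L v p).
Proof.
move=> Hv Hbv Hpv; rewrite /W /L.
case: (ltnP b 7) => Hb; case: (ltnP p 10) => Hp.
- enum7 b; enum10 p; crush.
- enum7 b; crush.
- enum10 p; crush.
- crush.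
Qed.

Lemma W_ok v b : 12 <= v -> b < v ->
  [/\ uniq (W v b), all (fun x => x < v) (W v b) & size (W v b) = 3].
Proof.
move=> Hv Hbv; rewrite /W; case: (ltnP b 7) => Hb.
- enum7 b; split => //=; crush.
- split => //=; rewrite ?andbT; crush.
Qed.

Lemma L_ok v p : 12 <= v -> p < v ->
  [/\ uniq (L v p), all (fun x => x < v) (L v p) & size (L v p) = 3].
Proof.
move=> Hv Hpv; rewrite /L; case: (ltnP p 10) => Hp.
- enum10 p; split => //=; rewrite ?andbT; crush.
- split => //=; rewrite ?andbT; crush.
Qed.

Lemma pairW v b1 b2 p q : 12 <= v -> b1 < v -> b2 < v -> p < v -> q < v -> p != q ->
  p \in W v b1 -> q \in W v b1 -> p \in W v b2 -> q \in W v b2 -> b1 = b2.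
Proof.
move=> Hv H1 H2 Hp Hq; rewrite /W.
case: (ltnP b1 7) => Hb1; case: (ltnP b2 7) => Hb2.
- enum7 b1; enum7 b2; crush.
- enum7 b1; crush.
- enum7 b2; crush.
- crush.
Qed.

Definition col (p : nat) : nat :=
  if p == 0 then 4 else if p == 1 then 0 else if p == 2 then 0 else
  if p == 3 then 3 else if p == 4 then 4 else p %% 4.

Lemma col_lt p : col p < 5.
Proof. rewrite /col; repeat case: ifP => ?; lia. Qed.

Lemma colW v b p q : v %% 4 = 0 -> 12 <= v -> b < v -> p < v -> q < v ->
  p \in W v b -> q \in W v b -> col p = col q -> p = q.
Proof.
move=> H4 Hv Hb Hp Hq; rewrite /W /col.
case: (ltnP b 7) => Hb7.
- enum7 b; crush.
- crush.
Qed.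

Lemma card_val n (P : pred nat) : #|[set x : 'I_n | P (val x)]| = count P (iota 0 n).
Proof.
rewrite cardsE cardE -val_enum_ord count_map /enum_mem size_filter.
by rewrite (@eq_filter _ _ predT) ?filter_predT.
Qed.

Lemma cnt_uniq (s t : seq nat) : uniq s -> uniq t -> {subset s <= t} -> count (mem s) t = size s.
Proof.
move=> us ut st. rewrite -size_filter. apply: perm_size. apply: uniq_perm => //.
  exact: filter_uniq.
move=> x; rewrite mem_filter. apply/andP/idP => [[]//|xs]; split => //; exact: st.
Qed.

Lemma card_seq v (s : seq nat) : uniq s -> all (fun x => x < v) s ->
  #|[set x : 'I_v | val x \in s]| = size s.
Proof.
move=> us al; rewrite card_val; apply: cnt_uniq => //; first exact: iota_uniq.
move=> x xs; rewrite mem_iota /=; move/allP: al => /(_ x xs); lia.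
Qed.

Definition kb x y :=
  let f b := (x \in wn b) && (y \in wn b) in
  if f 0 then 0 else if f 1 then 1 else if f 2 then 2 else if f 3 then 3
  else if f 4 then 4 else if f 5 then 5 else 6.

Lemma kb_ok : [forall i : 'I_5, forall j : 'I_5,
  (2 + i \in wn (kb (2+i) (2+j))) && (2 + j \in wn (kb (2+i) (2+j)))].
Proof.
apply/forallP => -[[|[|[|[|[|i]]]]] Hi] //; apply/forallP => -[[|[|[|[|[|j]]]]] Hj] //.
Qed.

Lemma kb_lt x y : kb x y < 7.
Proof. rewrite /kb; repeat case: ifP => //. Qed.

Lemma W_step v m : 7 <= m -> m.+1 < v -> (m \in W v m) && (m.+1 \in W v m).
Proof. move=> h1 h2; rewrite /W (_ : m < 7 = false); last lia. crush. Qed.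

Theorem mainTheorem19 (v : nat) :
  v %% 4 = 0 -> 12 <= v ->
  exists B : 'I_v -> {set 'I_v},
    [/\ sym_config3 B, config_connected B & strong_chromatic_number_eq B 5].
Proof.
case: v => [|n] // H4 Hv.
pose B := fun b : 'I_n.+1 => [set p : 'I_n.+1 | nat_of_ord p \in W n.+1 (nat_of_ord b)].
have memB : forall (b p : 'I_n.+1), (p \in B b) = (nat_of_ord p \in W n.+1 (nat_of_ord b)).
  by move=> b p; rewrite inE.
exists B; split.
- split; [|split].
  + move=> b; have [u a s] := W_ok Hv (ltn_ord b).
    by rewrite /B card_seq.
  + move=> p.
    have -> : [set b | p \in B b] = [set b : 'I_n.+1 | val b \in L n.+1 (val p)].
      by apply/setP => b; rewrite !inE (memWL Hv (ltn_ord b) (ltn_ord p)).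
    have [u a s] := L_ok Hv (ltn_ord p).
    by rewrite card_seq.
  + move=> p q pq; apply/card_le1_eqP => b1 b2; rewrite !inE.
    move=> /andP[h1 h2] /andP[h3 h4]; apply: val_inj.
    apply: (pairW (v := n.+1) (p := val p) (q := val q) Hv) => //; try exact: ltn_ord.
- move=> [P [P0 PC Hb]].
  have link : forall x y b, x < n.+1 -> y < n.+1 -> b < n.+1 ->
      x \in W n.+1 b -> y \in W n.+1 b ->
      ((inord x : 'I_n.+1) \in P) = ((inord y : 'I_n.+1) \in P).
    move=> x y b hx hy hb mx my.
    have mx' : (inord x : 'I_n.+1) \in B (inord b) by rewrite memB !inordK.
    have my' : (inord y : 'I_n.+1) \in B (inord b) by rewrite memB !inordK.
    case: (Hb (inord b)) => /subsetP S.
    * by rewrite (S _ mx') (S _ my').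
    * by move: (S _ mx') (S _ my'); rewrite !inE => /negPf -> /negPf ->.
  have up : forall k, 7 + k < n.+1 ->
      ((inord (7 + k) : 'I_n.+1) \in P) = ((inord 7 : 'I_n.+1) \in P).
    elim=> [|k IH] hk //.
    rewrite -IH; last lia.
    have /andP[m1 m2] := W_step (v := n.+1) (m := 7 + k) (leq_addr _ _) ltac:(lia).
    rewrite addnS; apply: (link _ _ (7 + k)); try lia; by [].
  have key : forall m, m < n.+1 ->
      ((inord m : 'I_n.+1) \in P) = ((inord 7 : 'I_n.+1) \in P).
    move=> m hm.
    have e8 : ((inord 8 : 'I_n.+1) \in P) = ((inord 7 : 'I_n.+1) \in P)
      by apply: (up 1); apply: (leq_trans _ Hv).
    have e9 : ((inord 9 : 'I_n.+1) \in P) = ((inord 7 : 'I_n.+1) \in P)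
      by apply: (up 2); apply: (leq_trans _ Hv).
    have l07 : ((inord 0 : 'I_n.+1) \in P) = ((inord 7 : 'I_n.+1) \in P)
      by apply: (link _ _ 4); (try by rewrite /W); apply: (leq_trans _ Hv).
    have l17 : ((inord 1 : 'I_n.+1) \in P) = ((inord 7 : 'I_n.+1) \in P)
      by apply: (link _ _ 4); (try by rewrite /W); apply: (leq_trans _ Hv).
    have l38 : ((inord 3 : 'I_n.+1) \in P) = ((inord 8 : 'I_n.+1) \in P)
      by apply: (link _ _ 0); (try by rewrite /W); apply: (leq_trans _ Hv).
    have l48 : ((inord 4 : 'I_n.+1) \in P) = ((inord 8 : 'I_n.+1) \in P)
      by apply: (link _ _ 0); (try by rewrite /W); apply: (leq_trans _ Hv).
    have l69 : ((inord 6 : 'I_n.+1) \in P) = ((inord 9 : 'I_n.+1) \in P)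
      by apply: (link _ _ 1); (try by rewrite /W); apply: (leq_trans _ Hv).
    have l53 : ((inord 5 : 'I_n.+1) \in P) = ((inord 3 : 'I_n.+1) \in P)
      by apply: (link _ _ 2); (try by rewrite /W); apply: (leq_trans _ Hv).
    have l24 : ((inord 2 : 'I_n.+1) \in P) = ((inord 4 : 'I_n.+1) \in P)
      by apply: (link _ _ 3); (try by rewrite /W); apply: (leq_trans _ Hv).
    case: (ltnP m 7) => hm7.
    + case: m hm hm7 => [|[|[|[|[|[|[|m]]]]]]] hm hm7.
      * exact: l07.
      * exact: l17.
      * by rewrite l24 l48 e8.
      * by rewrite l38 e8.
      * by rewrite l48 e8.
      * by rewrite l53 l38 e8.
      * by rewrite l69 e9.
      * by [].
    + by have := up (m - 7); rewrite subnKC //; apply.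
  case/set0Pn: P0 => x xP; case/set0Pn: PC => y; rewrite inE => /negP; apply.
  have ky := key (nat_of_ord y) (ltn_ord y).
  have kx := key (nat_of_ord x) (ltn_ord x).
  rewrite !inord_val in kx ky.
  by rewrite ky -kx.
- split.
  + exists (fun p : 'I_n.+1 => (inord (col (val p)) : 'I_5)).
    move=> b x y; rewrite !memB => hx hy /(congr1 (@nat_of_ord _)).
    rewrite !inordK ?col_lt // => e; apply: val_inj.
    exact: (colW H4 Hv (ltn_ord b) (ltn_ord x) (ltn_ord y)).
  + move=> k Hk [c Hc].
    pose f := fun i : 'I_5 => c (inord (2 + i)).
    have finj : injective f.
      move=> i j e; have hi := ltn_ord i; have hj := ltn_ord j.
      have /forallP /(_ i) /forallP /(_ j) /andP [m1 m2] := kb_ok.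
      set b := kb (2 + i) (2 + j) in m1 m2.
      have hb : b < 7 := kb_lt _ _.
      have hWb : W n.+1 b = wn b by rewrite /W hb.
      have := Hc (inord b) (inord (2 + i)) (inord (2 + j)).
      rewrite !memB !inordK; try lia.
      rewrite hWb => /(_ m1 m2 e) /(congr1 (@nat_of_ord _)); rewrite !inordK; try lia.
      move=> e'; apply: val_inj => /=; lia.
    have := leq_card f finj; rewrite !card_ord; lia.
Qed.
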